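(* Let $\mathcal{V}$ be a variety of algebras, $\mathcal{C}$ a full subcategory of the category of finitely generated free $\mathcal{V}$-algebras containing the free monogenic algebra $A_0$ on $x_0$, and $\Phi$ an automorphism of $\mathcal{C}$ with main function $(s^\Phi_A)$. Then there exists an element $\mathbf{t}(x_0)\in A_0$ (a term in the single variable $x_0$) such that for every $\mathcal{C}$-algebra $A$, $$s^\Phi_A(|A|)=\{\mathbf{t}(u)\mid u\in|\Phi(A)|\}.$$
   Context: Morphisms of $\mathcal{C}$ are all homomorphisms. For $a\in A$, $\alpha^A_a:A_0\to A$ is the homomorphism with $x_0\mapsto a$, and for $\mathbf{t}(x_0)\in A_0$ and $u$ in an algebra $B$, $\mathbf{t}(u):=\alpha^B_u(\mathbf{t}(x_0))$. Let $\eta^\Phi_0:\Phi^{-1}(A_0)\to A_0$ be the homomorphism sending every element of a fixed basis of $\Phi^{-1}(A_0)$ to $x_0$ (the identity if $\Phi(A_0)=A_0$), and $\eta^\Phi=\Phi(\eta^\Phi_0):A_0\to\Phi(A_0)$. The main function is $s^\Phi_A:|A|\to|\Phi(A)|$, $s^\Phi_A(a)=\Phi(\alpha^A_a)(\eta^\Phi(x_0))$. *)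

(* Defs.v *)
From mathcomp Require Import ssreflect ssrfun ssrbool eqtype ssrnat fintype.

Set Implicit Arguments.
Unset Strict Implicit.
Unset Printing Implicit Defensive.

Record signature := Signature { op : Type; arity : op -> nat }.

Section UA.
Variable S : signature.

Record alg := Alg {
  car :> Type;
  interp : forall o : op S, ('I_(arity o) -> car) -> car }.
Arguments interp : clear implicits.

Inductive term (X : Type) : Type :=
| Var : X -> term X
| App : forall o : op S, ('I_(arity o) -> term X) -> term X.

Fixpoint eval (X : Type) (A : alg) (v : X -> car A) (t : term X) : car A :=
  match t with
  | Var x => v x
  | App o args => interp A o (fun k => @eval X A v (args k))
  end.

Record hom (A B : alg) := Hom {
  hfun :> car A -> car B;
  hmorph : forall o (args : 'I_(arity o) -> car A),
      hfun (interp A o args) = interp B o (fun k => hfun (args k)) }.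

Definition idhom (A : alg) : hom A A.
Proof. by exists (fun x => x). Defined.

Definition comphom (A B C : alg) (g : hom B C) (f : hom A B) : hom A C.
Proof.
exists (fun x => g (f x)) => o args.
by rewrite !hmorph.
Defined.

(** The variety V is given by a set E of identities (pairs of terms in
    countably many variables); an algebra is in V iff it satisfies E. *)
Definition satisfies (E : term nat -> term nat -> Prop) (A : alg) : Prop :=
  forall l r, E l r -> forall v : nat -> car A, eval v l = eval v r.

Definition free_on (E : term nat -> term nat -> Prop) (A : alg) (n : nat)
    (b : 'I_n -> car A) : Prop :=
  forall B : alg, satisfies E B ->
  forall g : 'I_n -> car B,
    exists h : hom A B, (forall k, h (b k) = g k) /\
      forall h' : hom A B, (forall k, h' (b k) = g k) -> forall x, h' x = h x.


Definition fg_free (E : term nat -> term nat -> Prop) (A : alg) : Prop :=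
  satisfies E A /\ exists (n : nat) (b : 'I_n -> car A), @free_on E A n b.

End UA.

Arguments Var {S X}.
Arguments App {S X}.
Arguments eval {S X} A v t.
Arguments satisfies {S} E A.
Arguments free_on {S} E A n b.
Arguments fg_free {S} E A.

(** A full subcategory of V-algebras is given by a family of algebras
    [A : I -> alg S] (its objects); its morphisms are all homomorphisms.
    An automorphism of this category (an isomorphism of categories onto
    itself): a functor which is bijective on objects and on each hom-set.
    Equality of morphisms is equality of the underlying maps. *)
Record cat_auto (S : signature) (I : Type) (A : I -> alg S) := CatAuto {
  ob : I -> I;
  ob_inv : I -> I;
  obK : cancel ob ob_inv;
  ob_invK : cancel ob_inv ob;
  mor : forall i j, hom (A i) (A j) -> hom (A (ob i)) (A (ob j));
  mor_id : forall i x, mor (idhom (A i)) x = x;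
  mor_comp : forall i j k (f : hom (A i) (A j)) (g : hom (A j) (A k)) x,
      mor (comphom g f) x = mor g (mor f x);
  mor_inj : forall i j (f g : hom (A i) (A j)),
      (forall x, mor f x = mor g x) -> forall x, f x = g x;
  mor_surj : forall i j (g : hom (A (ob i)) (A (ob j))),
      exists f : hom (A i) (A j), forall x, mor f x = g x }.

Arguments ob {S I A}.
Arguments ob_inv {S I A}.
Arguments ob_invK {S I A}.
Arguments mor {S I A} c {i j}.

Definition castA (S : signature) (I : Type) (A : I -> alg S) (i j : I)
    (e : i = j) (x : car (A i)) : car (A j) :=
  eq_rect i (fun k => car (A k)) x j e.

Arguments castA {S I} A {i j} e x.

Section MainFunction.
Variables (S : signature) (I : Type) (A : I -> alg S) (Phi : cat_auto A).
Variables (i0 : I) (x0 : car (A i0)).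
Variable eta0 : hom (A (ob_inv Phi i0)) (A i0).

(** [eta^Phi(x0)], where [eta^Phi = Phi(eta0) : A_0 -> Phi(A_0)]
    (here A_0 = Phi(Phi^{-1}(A_0)) up to the transport [castA]). *)
Definition eta_x0 : car (A (ob Phi i0)) :=
  mor Phi eta0 (castA A (esym (ob_invK Phi i0)) x0).

(** [alpha_hom h a] : h is alpha^B_a, i.e. the homomorphism A_0 -> B with
    x0 |-> a (unique, since A_0 is free on x0). *)
Definition is_alpha (B : alg S) (h : hom (A i0) B) (a : car B) : Prop :=
  h x0 = a.

(** Graph of the main function: [s^Phi_{A_i}(a) = y]
    iff [Phi(alpha_a)(eta^Phi(x0)) = y]. *)
Definition main_fun_graph (i : I) (a : car (A i)) (y : car (A (ob Phi i))) :
    Prop :=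
  exists h : hom (A i0) (A i), is_alpha h a /\ mor Phi h eta_x0 = y.

(** [t(u) = y] where [t(x0) = w \in A_0]: [t(u) := alpha^B_u (w)]. *)
Definition term_at (w : car (A i0)) (B : alg S) (u : car B) (y : car B) :
    Prop :=
  exists h : hom (A i0) B, is_alpha h u /\ h w = y.

End MainFunction.

Arguments eta_x0 {S I A} Phi i0 x0 eta0.
Arguments is_alpha {S I A i0} x0 {B} h a.
Arguments main_fun_graph {S I A} Phi i0 x0 eta0 {i} a y.
Arguments term_at {S I A i0} x0 w {B} u y.

(* Main.v *)
Require Import Defs.
From mathcomp Require Import ssreflect ssrfun ssrbool eqtype ssrnat fintype.
From Stdlib Require Import FunctionalExtensionality ProofIrrelevance.

Lemma hom_ext (S : signature) (X Y : alg S) (f g : hom X Y) :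
  (forall x, f x = g x) -> f = g.
Proof.
case: f => f Hf; case: g => g Hg /= H.
have E := functional_extensionality _ _ H; subst g.
by rewrite (proof_irrelevance _ Hf Hg).
Qed.

Definition casth (S : signature) (I : Type) (A : I -> alg S) (i j : I)
  (e : i = j) : hom (A i) (A j).
Proof. exists (castA A e). by destruct e. Defined.
Arguments casth {S I} A {i j} e.

Lemma castK (S : signature) (I : Type) (A : I -> alg S) (i j : I)
  (e : i = j) x : castA A e (castA A (esym e) x) = x.
Proof. by destruct e. Qed.

Lemma castK' (S : signature) (I : Type) (A : I -> alg S) (i j : I)
  (e : i = j) x : castA A (esym e) (castA A e x) = x.
Proof. by destruct e. Qed.

Theorem theorem2 (S : signature) (E : term S nat -> term S nat -> Prop)
  (I : Type) (A : I -> alg S)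
  (HC : forall i, fg_free E (A i))
  (i0 : I) (x0 : car (A i0))
  (HA0 : free_on E (A i0) 1 (fun _ => x0))
  (Phi : cat_auto A)
  (n : nat) (bas : 'I_n -> car (A (ob_inv Phi i0)))
  (Hbas : free_on E (A (ob_inv Phi i0)) n bas)
  (eta0 : hom (A (ob_inv Phi i0)) (A i0))
  (Heta0 : forall k, eta0 (bas k) = x0)
  (Heta0_id : forall (e : ob_inv Phi i0 = i0) (x : car (A (ob_inv Phi i0))),
      eta0 x = castA A e x) :
  exists w : car (A i0), forall (i : I) (y : car (A (ob Phi i))),
    (exists a : car (A i), main_fun_graph Phi i0 x0 eta0 a y) <->
    (exists u : car (A (ob Phi i)), term_at x0 w u y).
Proof.
set D := ob_inv Phi i0.
pose p : ob Phi D = i0 := ob_invK Phi i0.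
pose c := casth A p.
pose c' := casth A (esym p).
have Hcc' : forall x, c (c' x) = x by move=> x; exact: castK.
have Hc'c : forall x, c' (c x) = x by move=> x; exact: castK'.
have Hp : exists q : car (A D), eta0 q = x0.
  case: n bas Hbas Heta0 {Heta0_id} => [|n'] bas Hbas Heta0; last first.
    by exists (bas ord0).
  have single : forall a : car (A i0), a = x0.
    move=> a.
    have [al [Hal _]] := HA0 (A i0) (HC i0).1 (fun _ => a).
    have [f Hf] := mor_surj (comphom c' (comphom al c)).
    have [h [_ Hh]] := Hbas (A D) (HC D).1 bas.
    have fid : f = idhom (A D).
      apply: hom_ext => x.
      by rewrite (Hh f) ?(Hh (idhom _)) // => -[].
    have := Hf (c' x0); rewrite fid mor_id /=.
    rewrite castK (Hal ord0) => H.
    by move: (f_equal (castA A p) H); rewrite !castK.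
  have [m [b' Hb']] := (HC (ob Phi i0)).2.
  have [g0 _] := Hb' (A (ob Phi D)) (HC _).1 (fun _ => c' x0).
  have [f1 _] := mor_surj g0.
  by exists (f1 x0); apply: single.
case: Hp => q Hq.
have [iota [Hiota _]] := HA0 (A D) (HC D).1 (fun _ => q).
have Hid : comphom eta0 iota = idhom (A i0).
  have [h0 [_ Hh0]] := HA0 (A i0) (HC i0).1 (fun _ => x0).
  apply: hom_ext => x.
  transitivity (h0 x).
    apply: Hh0 => k /=; by rewrite (Hiota k).
  symmetry; by apply: Hh0.
have Key : forall z, mor Phi eta0 (mor Phi iota z) = z.
  by move=> z; rewrite -mor_comp Hid mor_id.
pose e := eta_x0 Phi i0 x0 eta0.
have He : e = mor Phi eta0 (c' x0) by reflexivity.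
exists (c (mor Phi iota e)) => i y; split.
- case=> a [h [Ha Hy]].
  exists (mor Phi h e).
  exists (comphom (mor Phi h) (comphom (mor Phi eta0) c')); split.
    by rewrite /is_alpha /= -He.
  by rewrite /= castK' Key.
- case=> u [h [Hu Hy]].
  have [g Hg] := mor_surj (comphom h (comphom c (mor Phi iota))).
  exists (g x0), g; split => //.
  by rewrite Hg.
Qed.
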